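(* Let $N=[n]$ and $v:2^N\to\mathbb{R}_+$ be a monotone valuation with $v(\emptyset)=0$. The decision map that, for each $p\in\mathbb{R}^n_+$, chooses the lexicographically first set in $D(v;p)$ is up-consistent; and the decision map that chooses the lexicographically first set among the maximal (with respect to inclusion) sets of $D(v;p)$ is maximal and up-consistent.
   Context: For $p\in\mathbb{R}^n_+$, $p(S)=\sum_{j\in S}p_j$ and $D(v;p)=\arg\max_{S\subseteq N}(v(S)-p(S))$. A decision map is $X:\mathbb{R}^n_+\to2^N$ with $X(p)\in D(v;p)$ for all $p$; it is maximal if for every $p$ there is no $S'\in D(v;p)$ with $X(p)\subsetneq S'$. ''Lexicographically first'' refers to a fixed lexicographic total order on subsets of $N$. A decision map $X$ is up-consistent if for every price vector $p$ with $X(p)=S$, every $i$ and every $p_i'>p_i$, either $X(p_i',p_{-i})=S$ or $i\notin X(p_i',p_{-i})$. *)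

(* Defs.v *)
From mathcomp Require Import all_boot all_order all_algebra.
Set Implicit Arguments. Unset Strict Implicit. Unset Printing Implicit Defensive.
Import Order.TTheory GRing.Theory Num.Theory.
Local Open Scope ring_scope.

Section Defs.
Variables (R : realFieldType) (n : nat).

Definition nonneg_prices (p : 'I_n -> R) : Prop := forall j, 0 <= p j.

Definition price_of (p : 'I_n -> R) (S : {set 'I_n}) : R := \sum_(j in S) p j.

Definition demand (v : {set 'I_n} -> R) (p : 'I_n -> R) : {set {set 'I_n}} :=
  [set S : {set 'I_n} | [forall T : {set 'I_n},
      v T - price_of p T <= v S - price_of p S]].

Definition upd (p : 'I_n -> R) (i : 'I_n) (x : R) : 'I_n -> R :=
  fun j => if j == i then x else p j.

Definition monotone_val (v : {set 'I_n} -> R) : Prop :=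
  forall S T : {set 'I_n}, S \subset T -> v S <= v T.

Definition decision_map (v : {set 'I_n} -> R) (X : ('I_n -> R) -> {set 'I_n}) : Prop :=
  forall p, nonneg_prices p -> X p \in demand v p.

Definition maximal_map (v : {set 'I_n} -> R) (X : ('I_n -> R) -> {set 'I_n}) : Prop :=
  forall p, nonneg_prices p ->
    ~ exists S' : {set 'I_n}, (S' \in demand v p) /\ (X p \proper S').

Definition up_consistent (X : ('I_n -> R) -> {set 'I_n}) : Prop :=
  forall p, nonneg_prices p -> forall (i : 'I_n) (x : R), p i < x ->
    X (upd p i x) = X p \/ i \notin X (upd p i x).

End Defs.

Fixpoint lex_leq (s t : seq nat) : bool :=
  match s, t with
  | [::], _ => true
  | _ :: _, [::] => false
  | x :: s', y :: t' => (x < y)%N || ((x == y) && lex_leq s' t')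
  end.

(* A subset of 'I_n is identified with the increasing word of its elements;
   subsets are ordered lexicographically on these words. *)
Definition set_word n (S : {set 'I_n}) : seq nat := [seq val i | i <- enum S].
Definition lex_set_le n (S T : {set 'I_n}) : bool := lex_leq (set_word S) (set_word T).

(* The lexicographically first element of a family of sets (set0 if empty). *)
Definition lex_first n (F : {set {set 'I_n}}) : {set 'I_n} :=
  odflt set0 [pick S in F | [forall T in F, lex_set_le S T]].

Definition maximal_members n (F : {set {set 'I_n}}) : {set {set 'I_n}} :=
  [set S in F | maxset (fun T => T \in F) S].

Definition lex_decision (R : realFieldType) n (v : {set 'I_n} -> R)
  : ('I_n -> R) -> {set 'I_n} := fun p => lex_first (demand v p).

Definition lex_max_decision (R : realFieldType) n (v : {set 'I_n} -> R)
  : ('I_n -> R) -> {set 'I_n} := fun p => lex_first (maximal_members (demand v p)).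

(* Main.v *)
Require Import Defs.
From mathcomp Require Import all_boot all_order all_algebra.
Import Order.TTheory GRing.Theory Num.Theory.
Local Open Scope ring_scope.

Lemma lex_refl s : lex_leq s s.
Proof. by elim: s => //= x s IH; rewrite eqxx IH orbT. Qed.

Lemma lex_total s t : lex_leq s t || lex_leq t s.
Proof.
elim: s t => [|x s IH] [|y t] //=.
case: (ltngtP x y) => //= ->; rewrite eqxx /=; exact: IH.
Qed.

Lemma lex_trans s t u : lex_leq s t -> lex_leq t u -> lex_leq s u.
Proof.
elim: s t u => [|x s IH] [|y t] [|z u] //=.
case/orP=> [xy|/andP[/eqP-> st]]; case/orP=> [yz|/andP[/eqP<- tu]].
- by rewrite (ltn_trans xy yz).
- by rewrite xy.
- by rewrite yz.
- by rewrite eqxx (IH _ _ st tu) orbT.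
Qed.

Lemma lex_anti s t : lex_leq s t -> lex_leq t s -> s = t.
Proof.
elim: s t => [|x s IH] [|y t] //=.
case/orP=> [xy|/andP[/eqP-> st]]; case/orP=> [yx|/andP[/eqP yx ts]].
- by move: (ltn_trans xy yx); rewrite ltnn.
- by move: xy; rewrite yx ltnn.
- by move: yx; rewrite ltnn.
- by rewrite (IH _ st ts).
Qed.

Lemma set_word_inj n : injective (@set_word n).
Proof.
move=> S T h; apply/setP => j.
have: (val j \in set_word S) = (val j \in set_word T) by rewrite h.
by rewrite /set_word !(mem_map val_inj) !mem_enum.
Qed.

Lemma seq_min (T : eqType) (r : rel T) (s : seq T) :
  reflexive r -> transitive r -> total r -> s != [::] ->
  exists2 x, x \in s & forall y, y \in s -> r x y.
Proof.
move=> rr tr tt; elim: s => [|a s IH] _ //.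
case: (altP (s =P [::])) => [->|/IH [m ms hm]].
  by exists a; rewrite ?mem_head // => y; rewrite inE => /eqP->.
case/orP: (tt a m) => ham.
  exists a; rewrite ?mem_head // => y; rewrite inE => /orP[/eqP->//|/hm].
  exact: tr.
exists m; first by rewrite inE ms orbT.
by move=> y; rewrite inE => /orP[/eqP->//|/hm].
Qed.

Lemma lex_firstP n (F : {set {set 'I_n}}) : F != set0 ->
  lex_first F \in F /\ forall T, T \in F -> lex_set_le (lex_first F) T.
Proof.
move=> F0; rewrite /lex_first.
case: pickP => [S /andP[SF /forallP h]|h] /=.
  by split => // T TF; move: (h T); rewrite TF.
exfalso.
have : enum F != [::].
  case/set0Pn: F0 => S SF; apply/eqP => e.
  by move: SF; rewrite -mem_enum e.
case/(@seq_min _ (@lex_set_le n)).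
- by move=> S; exact: lex_refl.
- by move=> a b c; exact: lex_trans.
- by move=> a b; exact: lex_total.
move=> m; rewrite mem_enum => mF hm.
move: (h m); rewrite mF /=; move/negP; apply; apply/forallP => T.
by apply/implyP => TF; apply: hm; rewrite mem_enum.
Qed.

Lemma lex_first_eq n (F G : {set {set 'I_n}}) : F != set0 -> G != set0 ->
  lex_first F \in G -> lex_first G \in F -> lex_first F = lex_first G.
Proof.
move=> /lex_firstP [_ hF] /lex_firstP [_ hG] a b.
by apply: set_word_inj; apply: lex_anti; [apply: hF | apply: hG].
Qed.

From mathcomp Require Import lra.

Section Dem.
Variables (R : realFieldType) (n : nat) (v : {set 'I_n} -> R).

Lemma price_upd (p : 'I_n -> R) i x T :
  price_of (upd p i x) T = price_of p T + (if i \in T then x - p i else 0).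
Proof.
rewrite /price_of /upd; case: ifP => iT.
  rewrite (bigD1 i iT) [in RHS](bigD1 i iT) /= eqxx.
  rewrite (eq_bigr p); first by lra.
  by move=> j /andP[_ /negbTE ->].
by rewrite addr0; apply: eq_bigr => j jT; case: eqP => // e; move: iT; rewrite -e jT.
Qed.

Lemma demandP p S : reflect (forall T, v T - price_of p T <= v S - price_of p S)
  (S \in demand v p).
Proof.
rewrite inE; apply: (iffP forallP) => h T; exact: h.
Qed.

Lemma demand_n0 p : demand v p != set0.
Proof.
have : enum [set: {set 'I_n}] != [::].
  apply/eqP => e; have : set0 \in enum [set: {set 'I_n}] by rewrite mem_enum inE.
  by rewrite e.
case/(@seq_min _ (fun S T => v T - price_of p T <= v S - price_of p S)).
- by move=> S /=.
- by move=> a b c /= h1 h2; apply: le_trans h2 h1.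
- by move=> a b /=; exact: le_total.
move=> S _ h; apply/set0Pn; exists S; apply/demandP => T; apply: h.
by rewrite mem_enum inE.
Qed.

Variables (p : 'I_n -> R) (i : 'I_n) (x : R) (hx : p i < x)
  (S' : {set 'I_n}) (hS' : S' \in demand v (upd p i x)) (iS' : i \in S').

Lemma upA : S' \in demand v p.
Proof.
apply/demandP => T; move/demandP: hS' => /(_ T).
rewrite !price_upd iS'; case: (i \in T); have := hx; lra.
Qed.

Lemma upB T : T \in demand v p -> (i \in T) && (T \in demand v (upd p i x)).
Proof.
move/demandP => hT; move/demandP: (hS') => hS.
have iT : i \in T.
  apply/negPn/negP => iT; move: (hS T) (hT S'); rewrite !price_upd iS' (negbTE iT).
  have := hx; lra.
rewrite iT /=; apply/demandP => U; move: (hS U) (hT S'); rewrite !price_upd iS' iT.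
case: (i \in U); have := hx; lra.
Qed.

Lemma upC T : T \in demand v (upd p i x) -> i \in T -> T \in demand v p.
Proof.
move=> /demandP hT iT; move/demandP: (hS') => hS; move/demandP: upA => hA.
apply/demandP => U; move: (hA U) (hT S'); rewrite !price_upd iS' iT; have := hx; lra.
Qed.

End Dem.
Arguments demand_n0 {R n} v p.
Arguments upA {R n v p i x} hx {S'} hS' iS'.
Arguments upB {R n v p i x} hx {S'} hS' iS' {T}.
Arguments upC {R n v p i x} hx {S'} hS' iS' {T}.

Lemma mmP n (F : {set {set 'I_n}}) S :
  S \in maximal_members F <-> S \in F /\ forall T, T \in F -> S \subset T -> T = S.
Proof.
rewrite inE; split.
  by case/andP => SF /maxsetP [_ h].
by case=> SF h; rewrite SF /=; apply/maxsetP.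
Qed.

Lemma mm_n0 n (F : {set {set 'I_n}}) : F != set0 -> maximal_members F != set0.
Proof.
case/set0Pn => S SF; case: (@maxset_exists _ (fun T => T \in F) S SF) => A mA _.
apply/set0Pn; exists A; rewrite inE mA (maxsetp mA) //.
Qed.

Arguments lex_firstP {n F}.
Arguments lex_first_eq {n F G}.
Arguments mm_n0 {n F}.
Arguments mmP {n F S}.

Theorem mainTheorem10 (R : realFieldType) (n : nat) (v : {set 'I_n} -> R)
  (hmono : monotone_val v) (hv0 : v set0 = 0) (hpos : forall S, 0 <= v S) :
  (decision_map v (lex_decision v) /\ up_consistent (lex_decision v)) /\
  (decision_map v (lex_max_decision v) /\ maximal_map v (lex_max_decision v)
   /\ up_consistent (lex_max_decision v)).
Proof.
have mmD : forall p, lex_max_decision v p \in maximal_members (demand v p).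
  by move=> p; case: (lex_firstP (mm_n0 (demand_n0 v p))).
split; [split|split; [|split]].
- by move=> p _; case: (lex_firstP (demand_n0 v p)).
- move=> p _ i x hx; rewrite /lex_decision.
  case iS: (i \in lex_first (demand v (upd p i x))); last by right.
  left; have hS' : lex_first (demand v (upd p i x)) \in demand v (upd p i x).
    by case: (lex_firstP (demand_n0 v (upd p i x))).
  apply: lex_first_eq; rewrite ?demand_n0 //.
  + exact: upA hS' iS.
  + case: (lex_firstP (demand_n0 v p)) => h _.
    by case/andP: (upB hx hS' iS h).
- by move=> p _; move/mmP: (mmD p) => [].
- move=> p _ [S' [hS' /andP [sub ne]]]; move/mmP: (mmD p) => [_ h].
  by move: ne; rewrite (h _ hS' sub) subxx.
- move=> p _ i x hx.
  case iS: (i \in lex_max_decision v (upd p i x)); last by right.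
  left; move/mmP: (mmD (upd p i x)) => [hS' mS'].
  move/mmP: (mmD p) => [hS mS].
  rewrite /lex_max_decision; apply: lex_first_eq; rewrite ?mm_n0 ?demand_n0 //.
  + apply/mmP; split; first exact: upA hS' iS.
    move=> T TD sub; apply: mS' => //.
    by case/andP: (upB hx hS' iS TD).
  + case/andP: (upB hx hS' iS hS) => iT hT.
    apply/mmP; split => // T TD sub; apply: mS => //.
    apply: (upC hx hS' iS TD).
    by apply: (subsetP sub).
Qed.
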